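(* Let $\sigma\subseteq N_\mathbb{Q}$ be a strongly convex rational polyhedral cone, $\tau$ a $k$-dimensional regular face with primitive ray generators $p_1,\ldots,p_k$, $\{e_1^{(r)},e_2^{(r)}\}_{r=1}^k$ a set of Demazure roots of $\sigma$ compatible with $\tau$, and $\gamma$ a face of $\sigma$. Suppose that for each $r$ with $p_r\notin\gamma$ at least one of $e_1^{(r)},e_2^{(r)}$ lies in $\gamma^\perp$. Then the cone generated by $\gamma$ and $\{p_r: p_r\notin\gamma\}$ is a face of $\sigma$.
   Context: $N$ lattice, $M$ dual, $\langle\cdot,\cdot\rangle$ pairing. Regular face: primitive ray generators extend to a basis of $N$. Demazure root for a ray generator $p_i$ of $\sigma$: $e\in M$ with $\langle p_i,e\rangle=-1$ and $\langle p_j,e\rangle\ge0$ for all other ray generators $p_j$ of $\sigma$. Compatibility with $\tau$: $\langle p_s,e_1^{(r)}\rangle=\langle p_s,e_2^{(r)}\rangle=-\delta_{rs}$ for $r,s=1,\ldots,k$. *)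

(* Defs.v *)
(* N = Z^n is realised inside N_Q = 'rV[rat]_n as the
   row vectors with integral entries; M_Q is identified with 'rV[rat]_n
   via the standard pairing. *)
From HB Require Import structures.
From mathcomp Require Import all_boot all_order all_algebra.
Set Implicit Arguments. Unset Strict Implicit. Unset Printing Implicit Defensive.
Import Order.TTheory GRing.Theory Num.Theory.
Local Open Scope ring_scope.

Notation vecQ n := 'rV[rat]_n.

Definition pairing n (p e : vecQ n) : rat := \sum_(i < n) p 0 i * e 0 i.

Definition isLattice n (v : vecQ n) : Prop := forall i, v 0 i \is a Num.int.

Definition isPrimitive n (v : vecQ n) : Prop :=
  isLattice v /\ v <> 0 /\
  forall (q : vecQ n) (m : nat), isLattice q -> v = m%:R *: q -> m = 1%N.

Definition conic_hull n (A : vecQ n -> Prop) : vecQ n -> Prop :=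
  fun x => exists (m : nat) (f : 'I_m -> vecQ n) (c : 'I_m -> rat),
    (forall i, A (f i)) /\ (forall i, 0 <= c i) /\ x = \sum_(i < m) c i *: f i.

Definition polycone n (gens : seq (vecQ n)) : vecQ n -> Prop :=
  conic_hull (fun v => v \in gens).

Definition strongly_convex n (s : vecQ n -> Prop) : Prop :=
  forall x, s x -> s (- x) -> x = 0.

Definition dual_cone n (s : vecQ n -> Prop) : vecQ n -> Prop :=
  fun u => forall x, s x -> 0 <= pairing x u.

Definition isFace n (s F : vecQ n -> Prop) : Prop :=
  exists u, dual_cone s u /\ forall x, F x <-> (s x /\ pairing x u = 0).

Definition perp n (g : vecQ n -> Prop) : vecQ n -> Prop :=
  fun e => forall x, g x -> pairing x e = 0.

Definition isRayGen n (s : vecQ n -> Prop) (p : vecQ n) : Prop :=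
  isPrimitive p /\ isFace s (conic_hull (fun v => v = p)).

Definition isDemazureRootAt n (s : vecQ n -> Prop) (p e : vecQ n) : Prop :=
  isRayGen s p /\ isLattice e /\ pairing p e = -1 /\
  forall q, isRayGen s q -> q <> p -> 0 <= pairing q e.

Definition isDemazureRoot n (s : vecQ n -> Prop) (e : vecQ n) : Prop :=
  exists p, isDemazureRootAt s p e.

Definition isLatticeBasis n (b : 'I_n -> vecQ n) : Prop :=
  (forall i, isLattice (b i)) /\
  (forall v, isLattice v -> exists c : 'I_n -> int, v = \sum_(i < n) (c i)%:~R *: b i) /\
  (forall c : 'I_n -> rat, \sum_(i < n) c i *: b i = 0 -> forall i, c i = 0).

Definition extendsToBasis n k (p : 'I_k -> vecQ n) : Prop :=
  exists (b : 'I_n -> vecQ n) (f : 'I_k -> 'I_n),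
    isLatticeBasis b /\ injective f /\ forall r, b (f r) = p r.

Definition isRegularFaceWithRays n k (s : vecQ n -> Prop) (p : 'I_k -> vecQ n) : Prop :=
  let tau := conic_hull (fun v => exists r, v = p r) in
  isFace s tau /\ injective p /\
  (forall r, isRayGen s (p r)) /\
  (forall q, isRayGen s q -> tau q -> exists r, q = p r) /\
  extendsToBasis p.

Definition compatible n k (p e1 e2 : 'I_k -> vecQ n) : Prop :=
  forall r s, pairing (p s) (e1 r) = - (r == s)%:R /\ pairing (p s) (e2 r) = - (r == s)%:R.

(* Main.v *)
Require Import Defs.
From mathcomp Require Import all_boot all_order all_algebra.
From mathcomp Require Import ring lra.
From Stdlib Require Import Classical.
Set Implicit Arguments. Unset Strict Implicit. Unset Printing Implicit Defensive.
Import Order.TTheory GRing.Theory Num.Theory.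
Local Open Scope ring_scope.

Section Basics.
Variable n : nat.
Implicit Types (x y e u g q v : vecQ n).

Lemma pairingC x y : pairing x y = pairing y x.
Proof. by rewrite /pairing; apply: eq_bigr => i _; rewrite mulrC. Qed.

Lemma pairingDl x y e : pairing (x + y) e = pairing x e + pairing y e.
Proof. by rewrite /pairing -big_split /=; apply: eq_bigr => i _; rewrite mxE mulrDl. Qed.

Lemma pairingZl (c : rat) x e : pairing (c *: x) e = c * pairing x e.
Proof. by rewrite /pairing mulr_sumr; apply: eq_bigr => i _; rewrite mxE mulrA. Qed.

Lemma pairingNl x e : pairing (- x) e = - pairing x e.
Proof. by rewrite -scaleN1r pairingZl mulN1r. Qed.

Lemma pairingBl x y e : pairing (x - y) e = pairing x e - pairing y e.
Proof. by rewrite pairingDl pairingNl. Qed.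

Lemma pairing0l e : pairing 0 e = 0.
Proof. by rewrite /pairing big1 // => i _; rewrite mxE mul0r. Qed.

Lemma pairingDr x y e : pairing e (x + y) = pairing e x + pairing e y.
Proof. by rewrite !(pairingC e) pairingDl. Qed.
Lemma pairingZr (c : rat) x e : pairing e (c *: x) = c * pairing e x.
Proof. by rewrite !(pairingC e) pairingZl. Qed.
Lemma pairingNr x e : pairing e (- x) = - pairing e x.
Proof. by rewrite !(pairingC e) pairingNl. Qed.
Lemma pairingBr x y e : pairing e (x - y) = pairing e x - pairing e y.
Proof. by rewrite !(pairingC e) pairingBl. Qed.
Lemma pairing0r e : pairing e 0 = 0.
Proof. by rewrite pairingC pairing0l. Qed.

Lemma pairing_suml (I : Type) (r : seq I) (P : pred I) (F : I -> vecQ n) e :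
  pairing (\sum_(i <- r | P i) F i) e = \sum_(i <- r | P i) pairing (F i) e.
Proof.
elim/big_rec2: _ => [|i a b _ IH]; first exact: pairing0l.
by rewrite pairingDl -IH.
Qed.

Lemma pairing_sumr (I : Type) (r : seq I) (P : pred I) (F : I -> vecQ n) e :
  pairing e (\sum_(i <- r | P i) F i) = \sum_(i <- r | P i) pairing e (F i).
Proof.
rewrite pairingC pairing_suml; apply: eq_bigr => i _; exact: pairingC.
Qed.

Lemma pairing_delta x (i : 'I_n) : pairing x (delta_mx 0 i) = x 0 i.
Proof.
rewrite /pairing (bigD1 i) //= big1 => [|j ji]; first by rewrite !mxE !eqxx mulr1 addr0.
by rewrite !mxE eqxx /= (negbTE ji) mulr0.
Qed.

Fixpoint incone (L : seq (vecQ n)) x : Prop :=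
  match L with
  | [::] => x = 0
  | g :: L' => exists c, 0 <= c /\ incone L' (x - c *: g)
  end.

Lemma incone0 L : incone L 0.
Proof. by elim: L => [|g L IH] //=; exists 0; rewrite scale0r subr0. Qed.

Lemma inconeD L x y : incone L x -> incone L y -> incone L (x + y).
Proof.
elim: L x y => [|g L IH] x y /=; first by move=> -> ->; rewrite addr0.
move=> [c1 [h1 H1]] [c2 [h2 H2]]; exists (c1 + c2); split; first lra.
have -> : x + y - (c1 + c2) *: g = (x - c1 *: g) + (y - c2 *: g).
  by apply/rowP => i; rewrite !mxE; ring.
exact: IH.
Qed.

Lemma inconeZ L (c : rat) x : 0 <= c -> incone L x -> incone L (c *: x).
Proof.
elim: L x => [|g L IH] x hc /=; first by move=> ->; rewrite scaler0.
move=> [d [hd H]]; exists (c * d); split; first exact: mulr_ge0.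
have -> : c *: x - (c * d) *: g = c *: (x - d *: g).
  by apply/rowP => i; rewrite !mxE; ring.
exact: IH.
Qed.

Lemma incone_cons L v x : incone L x -> incone (v :: L) x.
Proof. by move=> H; exists 0; rewrite scale0r subr0. Qed.

Lemma incone_mem L g : g \in L -> incone L g.
Proof.
elim: L => [|h L IH] //; rewrite in_cons => /orP [/eqP ->|gL].
  by exists 1; rewrite scale1r subrr; split => //; exact: incone0.
exact/incone_cons/IH.
Qed.

Lemma incone_sub L L' x : (forall v, v \in L -> incone L' v) -> incone L x -> incone L' x.
Proof.
elim: L x => [|g L IH] x HL /=; first by move=> ->; exact: incone0.
move=> [c [hc H]].
have -> : x = (x - c *: g) + c *: g by rewrite subrK.
apply: inconeD; last by apply: inconeZ => //; apply: HL; rewrite mem_head.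
by apply: IH => // v vL; apply: HL; rewrite in_cons vL orbT.
Qed.

Lemma incone_pair L u x : (forall v, v \in L -> 0 <= pairing v u) -> incone L x -> 0 <= pairing x u.
Proof.
elim: L x => [|g L IH] x HL /=; first by move=> ->; rewrite pairing0l.
move=> [c [hc H]].
have -> : x = (x - c *: g) + c *: g by rewrite subrK.
rewrite pairingDl pairingZl; apply: addr_ge0.
  by apply: IH => // v vL; apply: HL; rewrite in_cons vL orbT.
by apply: mulr_ge0 => //; apply: HL; rewrite mem_head.
Qed.

Lemma incone_filter0 L u x : (forall v, v \in L -> 0 <= pairing v u) -> incone L x ->
  pairing x u = 0 -> incone [seq v <- L | pairing v u == 0] x.
Proof.
elim: L x => [|g L IH] x HL //= [c [hc H]] hx.
have HL' : forall v, v \in L -> 0 <= pairing v u by move=> v vL; apply: HL; rewrite in_cons vL orbT.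
have hg : 0 <= pairing g u by apply: HL; rewrite mem_head.
have h1 := incone_pair HL' H.
rewrite pairingBl pairingZl hx in h1.
have h2 : c * pairing g u = 0.
  apply/eqP; rewrite eq_le mulr_ge0 // andbT; lra.
case: eqP => [hg0|hg0] /=.
  exists c; split => //; apply: IH => //; rewrite pairingBl pairingZl hx hg0; ring.
have c0 : c = 0.
  by move/eqP: h2; rewrite mulf_eq0 => /orP [/eqP //|/eqP ?].
move: H; rewrite c0 scale0r subr0 => H; exact: IH.
Qed.

Lemma incone_const L g x : (forall v, v \in L -> v = g) -> incone L x -> exists d, 0 <= d /\ x = d *: g.
Proof.
elim: L x => [|h L IH] x HL /=; first by move=> ->; exists 0; rewrite scale0r.
move=> [c [hc H]].
have [d [hd Hd]] := IH _ (fun v vL => HL v (mem_behead (s := h :: L) vL)) H.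
have hh : h = g by apply: HL; rewrite mem_head.
exists (c + d); split; first lra.
by rewrite scalerDl -Hd -hh addrC subrK.
Qed.

End Basics.

Section Hull.
Variable n : nat.
Implicit Types (x y e u g q v : vecQ n).

Lemma conic_hull0 (A : vecQ n -> Prop) : conic_hull A 0.
Proof. exists 0%N, (fun _ => 0), (fun _ => 0); split; first by case.
by split => //; rewrite big_ord0. Qed.

Lemma conic_hull_cons (A : vecQ n -> Prop) g (c : rat) y :
  A g -> 0 <= c -> conic_hull A y -> conic_hull A (c *: g + y).
Proof.
move=> Ag hc [m [f [d [Hf [Hd ->]]]]].
exists m.+1, (fun i => if unlift ord0 i is Some j then f j else g),
  (fun i => if unlift ord0 i is Some j then d j else c).
split; first by move=> i; case: (unlift ord0 i).
split; first by move=> i; case: (unlift ord0 i).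
rewrite big_ord_recl unlift_none; congr (_ + _).
by apply: eq_bigr => i _; rewrite liftK.
Qed.

Lemma incone_conic (A : vecQ n -> Prop) L x : (forall v, v \in L -> A v) -> incone L x -> conic_hull A x.
Proof.
elim: L x => [|g L IH] x HL /=; first by move=> ->; exact: conic_hull0.
move=> [c [hc H]].
have -> : x = c *: g + (x - c *: g) by rewrite addrC subrK.
apply: conic_hull_cons => //; first by apply: HL; rewrite mem_head.
by apply: IH => // v vL; apply: HL; rewrite in_cons vL orbT.
Qed.

Lemma conic_incone (A : vecQ n -> Prop) L x : (forall v, A v -> incone L v) -> conic_hull A x -> incone L x.
Proof.
move=> HA [m [f [c [Hf [Hc ->]]]]].
apply: (big_ind (incone L)); [exact: incone0 | exact: inconeD |].
by move=> i _; apply: inconeZ => //; apply: HA.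
Qed.

Lemma polyconeP gens x : polycone gens x <-> incone gens x.
Proof.
split; first by apply: conic_incone => v; exact: incone_mem.
by apply: incone_conic => v.
Qed.

Lemma conic_hull1P q y : conic_hull (fun v => v = q) y <-> exists d, 0 <= d /\ y = d *: q.
Proof.
split.
  move=> [m [f [c [Hf [Hc ->]]]]]; exists (\sum_(i < m) c i); split.
    by apply: sumr_ge0 => i _.
  by rewrite scaler_suml; apply: eq_bigr => i _; rewrite Hf.
move=> [d [hd ->]]; rewrite -[d *: q]addr0; apply: conic_hull_cons => //.
exact: conic_hull0.
Qed.

Lemma raygen_in (s : vecQ n -> Prop) q : isRayGen s q -> s q.
Proof.
move=> [_ [u [_ Hu]]]; apply: (proj1 (proj1 (Hu q) _)).
by apply/conic_hull1P; exists 1; rewrite scale1r.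
Qed.

Lemma incone_shift (a : vecQ n) (t : vecQ n -> rat) A :
  (forall v, v \in A -> t v <= 0) -> forall y (s : rat), 0 <= s ->
  incone [seq v - t v *: a | v <- A] y -> incone (a :: A) (y + s *: a).
Proof.
elim: A => [|v A IH] Ht y s Hs /=.
  by move=> ->; exists s; split => //; rewrite add0r subrr.
move=> [c [Hc Hy]].
have Ht' : forall w, w \in A -> t w <= 0 by move=> w wA; apply: Ht; rewrite in_cons wA orbT.
have Htv : t v <= 0 by apply: Ht; rewrite mem_head.
have hs : 0 <= s - c * t v.
  have : 0 <= c * (- t v) by apply: mulr_ge0 => //; lra.
  rewrite mulrN; lra.
have [d [Hd H2]] := IH Ht' _ _ hs Hy.
exists d; split => //; exists c; split => //.
have -> : y + s *: a - d *: a - c *: v = y - c *: (v - t v *: a) + (s - c * t v) *: a - d *: a.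
  by apply/rowP => i; rewrite !mxE; ring.
exact: H2.
Qed.

Lemma farkas_aux k : forall (A : seq (vecQ n)) b, size A = k ->
  (forall x, (forall a, a \in A -> 0 <= pairing a x) -> 0 <= pairing b x) -> incone A b.
Proof.
elim: k => [|k IHk] [|a A] b //= hk H.
  apply/rowP => i; rewrite mxE.
  have h1 := H (delta_mx 0 i) (fun a (ha : a \in [::]) => False_ind _ (notF ha)).
  have h2 := H (- delta_mx 0 i) (fun a (ha : a \in [::]) => False_ind _ (notF ha)).
  rewrite pairingNr pairing_delta in h2; rewrite pairing_delta in h1; lra.
case: (classic (forall x, (forall a', a' \in A -> 0 <= pairing a' x) -> 0 <= pairing b x)) => [H'|H'].
  case: hk => hk.
  by exists 0; split => //; rewrite scale0r subr0; exact: IHk.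
have [x0 Hxx] := not_all_ex_not _ _ H'.
have [Hx0 Hb] := imply_to_and _ _ Hxx.
have hb : pairing b x0 < 0 by rewrite ltNge; apply/negP.
set al := pairing a x0.
have hal : al < 0.
  rewrite ltNge; apply/negP => ha.
  apply: Hb; apply: H => a'; rewrite in_cons => /orP [/eqP ->|]; [exact: ha | exact: Hx0].
have al0 : al != 0 by rewrite lt_eqF.
pose t v := pairing v x0 / al.
have key : incone [seq v - t v *: a | v <- A] (b - t b *: a).
  case: hk => hk.
  apply: IHk; first by rewrite size_map.
  move=> x Hx.
  pose x' := x - (pairing a x / al) *: x0.
  have Hx' : forall a', a' \in a :: A -> 0 <= pairing a' x'.
    move=> a'; rewrite in_cons => /orP [/eqP ->|a'A].
      rewrite /x' pairingBr pairingZr -/al divfK //; lra.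
    have := Hx _ (map_f (fun v => v - t v *: a) a'A).
    rewrite /x' /t pairingBr pairingZr pairingBl pairingZl -/al.
    have -> : pairing a' x0 / al * pairing a x = pairing a x / al * pairing a' x0 by ring.
    by [].
  have := H x' Hx'.
  rewrite /x' /t pairingBr pairingZr pairingBl pairingZl -/al.
  have -> : pairing b x0 / al * pairing a x = pairing a x / al * pairing b x0 by ring.
  by [].
have Ht : forall v, v \in A -> t v <= 0.
  move=> v vA; rewrite /t; apply: mulr_ge0_le0; first exact: Hx0.
  by rewrite invr_le0; apply: ltW.
have hs : 0 <= t b.
  rewrite /t; apply: ltW; rewrite -mulrNN; apply: mulr_gt0; rewrite oppr_gt0 ?invr_lt0 //.
have := incone_shift Ht hs key.
by rewrite subrK.
Qed.

Lemma farkas (A : seq (vecQ n)) b :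
  (forall x, (forall a, a \in A -> 0 <= pairing a x) -> 0 <= pairing b x) -> incone A b.
Proof. exact: farkas_aux. Qed.

End Hull.

Section Rays.
Variable n : nat.
Implicit Types (x y e u g q v h : vecQ n).

Lemma split_g g L z : incone L z -> exists d, 0 <= d /\ incone [seq v <- L | v != g] (z - d *: g).
Proof.
elim: L z => [|g' L IH] z /=; first by move=> ->; exists 0; rewrite scale0r subr0.
move=> [c [hc H]]; have [d [hd Hd]] := IH _ H.
case: eqP => [eg|ng] /=.
  exists (c + d); split; first lra.
  have -> : z - (c + d) *: g = z - c *: g' - d *: g by rewrite eg; apply/rowP => i; rewrite !mxE; ring.
  exact: Hd.
exists d; split => //; exists c; split => //.
have -> : z - d *: g - c *: g' = z - c *: g' - d *: g by apply/rowP => i; rewrite !mxE; ring.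
exact: Hd.
Qed.

Lemma expose1 L g h :
  (forall x, incone L x -> incone L (- x) -> x = 0) ->
  (forall v, v \in L -> v != 0) -> g \in L ->
  ~ incone [seq v <- L | v != g] g -> h \in [seq v <- L | v != g] ->
  exists u, pairing g u = 0 /\ (forall v, v \in L -> 0 <= pairing v u) /\ 0 < pairing h u.
Proof.
move=> Hsc H0 gL Hg hM.
set M := [seq v <- L | v != g] in Hg hM.
have hL : h \in L by move: hM; rewrite mem_filter => /andP [].
case: (classic (forall x, (forall a, a \in g :: - g :: L -> 0 <= pairing a x) -> 0 <= pairing (- h) x)) => [H|H].
  have /= [c1 [h1 [c2 [h2 HF]]]] := farkas H.
  have [d [hd Hd]] := split_g g HF; exfalso.
  set mu := c2 - c1 - d.
  have Hz : incone M (- h + mu *: g).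
    have -> : - h + mu *: g = - h - c1 *: g - c2 *: - g - d *: g by apply/rowP => i; rewrite !mxE /mu; ring.
    exact: Hd.
  have HhM : incone M h := incone_mem hM.
  have MsubL : forall v, v \in M -> incone L v by move=> v; rewrite mem_filter => /andP [_ ?]; exact: incone_mem.
  case: (ltrP 0 mu) => hmu.
    apply: Hg.
    have -> : g = mu^-1 *: (h + (- h + mu *: g)).
      by rewrite addrA subrr add0r scalerA mulVf ?scale1r // gt_eqF.
    by apply: inconeZ; [rewrite invr_ge0 ltW | exact: inconeD].
  have hh : h = 0.
    apply: Hsc; first exact: incone_mem.
    have -> : - h = (- h + mu *: g) + (- mu) *: g by rewrite scaleNr addrK.
    apply: inconeD; first exact: incone_sub MsubL Hz.
    by apply: inconeZ; [lra | exact: incone_mem].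
  by move: (H0 _ hL); rewrite hh eqxx.
have [x Hx] := not_all_ex_not _ _ H.
have [Hxa Hxb] := imply_to_and _ _ Hx.
exists x; split.
  have a1 := Hxa g (mem_head _ _).
  have a2 := Hxa (- g); rewrite pairingNl in a2.
  have a3 : 0 <= - pairing g x by apply: a2; rewrite in_cons mem_head orbT.
  lra.
split; first by move=> v vL; apply: Hxa; rewrite !in_cons vL !orbT.
rewrite pairingNl in Hxb.
have : ~ (pairing h x <= 0) by move=> hh; apply: Hxb; lra.
by move=> hn; rewrite ltNge; apply/negP.
Qed.

Lemma expose L g :
  (forall x, incone L x -> incone L (- x) -> x = 0) ->
  (forall v, v \in L -> v != 0) -> g \in L ->
  ~ incone [seq v <- L | v != g] g ->
  exists u, pairing g u = 0 /\ (forall v, v \in L -> 0 <= pairing v u) /\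
     (forall v, v \in L -> v != g -> 0 < pairing v u).
Proof.
move=> Hsc H0 gL Hg.
suff : forall S : seq (vecQ n), (forall h, h \in S -> h \in [seq v <- L | v != g]) ->
  exists u, pairing g u = 0 /\ (forall v, v \in L -> 0 <= pairing v u) /\
     (forall h, h \in S -> 0 < pairing h u).
  move=> /(_ [seq v <- L | v != g] (fun h hh => hh)) [u [h1 [h2 h3]]].
  exists u; split => //; split => // v vL vg; by apply: h3; rewrite mem_filter vg vL.
elim => [|h S IH] HS.
  by exists 0; rewrite pairing0r; split => //; split => // v _; rewrite pairing0r.
have [u1 [a1 [b1 c1]]] := expose1 Hsc H0 gL Hg (HS _ (mem_head _ _)).
have [u2 [a2 [b2 c2]]] := IH (fun v vS => HS v (mem_behead (s := h :: S) vS)).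
exists (u1 + u2); rewrite pairingDr a1 a2 addr0; split => //; split.
  by move=> v vL; rewrite pairingDr; apply: addr_ge0; [exact: b1 | exact: b2].
move=> v; rewrite in_cons => /orP [/eqP ->|vS]; rewrite pairingDr.
  by apply: ltr_wpDr => //; apply: b2; have := HS _ (mem_head _ _); rewrite mem_filter => /andP [].
apply: ltr_wpDl; last exact: c2.
by apply: b1; have := HS v (mem_behead (s := h :: S) vS); rewrite mem_filter => /andP [].
Qed.

Lemma ray_face gens L g u q (c : rat) :
  (forall x, polycone gens x <-> incone L x) -> g \in L -> pairing g u = 0 ->
  (forall v, v \in L -> 0 <= pairing v u) -> (forall v, v \in L -> v != g -> 0 < pairing v u) ->
  0 < c -> g = c *: q -> isFace (polycone gens) (conic_hull (fun v => v = q)).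
Proof.
move=> Heq gL hg HL Hpos hc Eg.
exists u; split; first by move=> x /Heq; apply: incone_pair.
have hq : pairing q u = 0.
  move: hg; rewrite Eg pairingZl => /eqP; rewrite mulf_eq0 gt_eqF //= => /eqP //.
move=> y; split.
  move/conic_hull1P => [d [hd ->]]; split; last by rewrite pairingZl hq mulr0.
  apply/Heq.
  have -> : d *: q = (d / c) *: g by rewrite Eg scalerA divfK // gt_eqF.
  by apply: inconeZ; [apply: divr_ge0 => //; exact: ltW | exact: incone_mem].
move=> [/Heq Hy Hy0].
have := incone_filter0 HL Hy Hy0.
move/(incone_const (g := g)) => [v|d [hd ->]].
  rewrite mem_filter => /andP [/eqP hv vL].
  case: (v =P g) => // /eqP vg; have := Hpos v vL vg; rewrite hv ltxx //.
apply/conic_hull1P; exists (d * c); split; first by apply: mulr_ge0 => //; exact: ltW.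
by rewrite Eg scalerA.
Qed.

End Rays.

From mathcomp Require Import zify.

Lemma minP (P : nat -> Prop) k : P k -> exists m, P m /\ forall j, (j < m)%N -> ~ P j.
Proof.
elim: k {-2}k (leqnn k) => [|N IH] m Hm Pm.
  exists m; split => // j; move: Hm; rewrite leqn0 => /eqP ->; by [].
case: (classic (exists j, (j < m)%N /\ P j)) => [[j [jm Pj]]|H].
  by apply: (IH j) => //; lia.
exists m; split => // j jm Pj; apply: H; by exists j.
Qed.

Section Prim.
Variable n : nat.
Implicit Types (x y e u g q v h : vecQ n).

Lemma lattice_multiple g : exists w, isLattice w /\ exists c : rat, 0 < c /\ g = c *: w.
Proof.
pose D : rat := \prod_(j < n) ((denq (g 0 j))%:~R : rat).
have hD : 0 < D by apply: prodr_gt0 => j _; rewrite ltr0z denq_gt0.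
exists (D *: g); split.
  move=> i; rewrite mxE /D (bigD1 i) //= mulrC mulrA.
  have -> : g 0 i * (denq (g 0 i))%:~R = (numq (g 0 i))%:~R.
    by rewrite -{1}(divq_num_den (g 0 i)) divfK // intr_eq0 denq_neq0.
  by apply: rpredM; [exact: intr_int | apply: rpred_prod => j _; exact: intr_int].
exists D^-1; split; first by rewrite invr_gt0.
by rewrite scalerA mulVf ?scale1r // gt_eqF.
Qed.

Lemma prim_scale g : g != 0 -> exists q (c : rat), isPrimitive q /\ 0 < c /\ g = c *: q.
Proof.
move=> g0.
have [i0 hi0] : exists i0, g 0 i0 != 0.
  apply: NNPP => H; move/eqP: g0; apply; apply/rowP => i; rewrite mxE.
  by apply: NNPP => hi; apply: H; exists i; apply/eqP.
pose P k := exists q, isLattice q /\ (exists c : rat, 0 < c /\ g = c *: q) /\ `|q 0 i0| = k%:R.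
have [w [wL Hw]] := lattice_multiple g.
have Pw : P (Num.trunc `|w 0 i0|) by exists w; rewrite truncnK //; exact: natr_norm_int.
have [k [[q [qL [[c [hc Eg]] Hk]]] Hmin]] := minP Pw.
exists q, c; split => //.
have q0 : q 0 i0 != 0 by move: hi0; rewrite Eg mxE mulf_eq0 negb_or => /andP [].
have kpos : (0 < k)%N by rewrite -(ltr0n rat) -Hk normr_gt0.
split => //; split; first by move=> qq; move: q0; rewrite qq mxE eqxx.
move=> q' m q'L Eq.
have m0 : m <> 0%N by move=> m0; move: q0; rewrite Eq m0 scale0r mxE eqxx.
case: (ltngtP m 1) => // hm; first by exfalso; apply: m0; lia.
exfalso.
pose k' := Num.trunc `|q' 0 i0|.
have Hk' : `|q' 0 i0| = k'%:R by rewrite truncnK //; exact: natr_norm_int.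
have Ek : k = (m * k')%N.
  apply/eqP; rewrite -(eqr_nat rat) -Hk Eq mxE normrM normr_nat Hk' natrM //.
have : (k' < k)%N by rewrite Ek; nia.
move/Hmin; apply.
exists q'; split => //; split => //.
exists (c * m%:R); split; first by apply: mulr_gt0 => //; rewrite ltr0n; lia.
by rewrite Eg Eq scalerA.
Qed.

End Prim.

Section Gen.
Variable n : nat.
Implicit Types (x y e u g q v h : vecQ n).

Lemma list_choice (P : vecQ n -> Prop) (L : seq (vecQ n)) :
  (forall g, g \in L -> exists q, P q /\ exists c : rat, 0 <= c /\ g = c *: q) ->
  exists Q, (forall q, q \in Q -> P q) /\ forall g, g \in L -> incone Q g.
Proof.
elim: L => [|g L IH] H; first by exists [::]; split.
have [Q [HQ HL]] := IH (fun g' g'L => H g' (mem_behead (s := g :: L) g'L)).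
have [q [Pq [c [hc Eg]]]] := H g (mem_head _ _).
exists (q :: Q); split.
  by move=> q'; rewrite in_cons => /orP [/eqP ->|]; [| exact: HQ].
move=> g'; rewrite in_cons => /orP [/eqP ->|g'L]; last exact/incone_cons/HL.
by rewrite Eg; apply: inconeZ => //; apply: incone_mem; rewrite mem_head.
Qed.

Lemma rays_gen gens : strongly_convex (polycone gens) ->
  exists Q, (forall q, q \in Q -> isRayGen (polycone gens) q) /\
            (forall x, polycone gens x -> incone Q x).
Proof.
move=> Hsc.
suff : forall N (L : seq (vecQ n)), (size L <= N)%N -> (forall x, polycone gens x <-> incone L x) ->
  exists Q, (forall q, q \in Q -> isRayGen (polycone gens) q) /\
            (forall x, polycone gens x -> incone Q x).
  by move/(_ (size gens) gens (leqnn _)); apply => x; exact: polyconeP.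
elim => [|N IH] L hL Heq.
  move: hL; rewrite leqn0 => /nilP HL0; rewrite HL0 in Heq.
  by exists [::]; split => // x /Heq.
case: (classic (exists g, g \in L /\ incone [seq v <- L | v != g] g)) => [[g [gL Hg]]|H].
  apply: (IH [seq v <- L | v != g]).
    rewrite size_filter.
    have := count_predC (fun v => v != g) L.
    have : (0 < count (predC (fun v => v != g)) L)%N.
      by rewrite -has_count; apply/hasP; exists g => //=; rewrite eqxx.
    move=> h1 h2; move: hL; rewrite -h2; move: h1.
    set a := count _ L; set b := count _ L; lia.
  move=> x; rewrite Heq; split; apply: incone_sub => v.
    case: (v =P g) => [-> _ //| /eqP vg vL]; apply: incone_mem; by rewrite mem_filter vg.
  by rewrite mem_filter => /andP [_ vL]; apply: incone_mem.
have Hirr : forall g, g \in L -> ~ incone [seq v <- L | v != g] g.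
  by move=> g gL Hg; apply: H; exists g.
have H0 : forall v, v \in L -> v != 0.
  move=> v vL; apply/eqP => v0; apply: (Hirr v vL); rewrite v0; exact: incone0.
have HscL : forall x, incone L x -> incone L (- x) -> x = 0.
  by move=> x /Heq h1 /Heq h2; apply: Hsc.
have [Q [HQ HLQ]] : exists Q, (forall q, q \in Q -> isRayGen (polycone gens) q) /\
    forall g, g \in L -> incone Q g.
  apply: list_choice => g gL.
  have [u [hu [hL' hpos]]] := expose HscL H0 gL (Hirr g gL).
  have [q [c [qP [hc Eg]]]] := prim_scale (H0 g gL).
  exists q; split; last by exists c; split => //; exact: ltW.
  split => //; exact: ray_face Heq gL hu hL' hpos hc Eg.
exists Q; split => // x /Heq Hx; exact: incone_sub HLQ Hx.
Qed.

End Gen.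

Theorem mainTheorem10 (n k : nat) (gens : seq 'rV[rat]_n)
  (p e1 e2 : 'I_k -> 'rV[rat]_n) (gamma : 'rV[rat]_n -> Prop) :
  strongly_convex (polycone gens) ->
  isRegularFaceWithRays (polycone gens) p ->
  (forall r, isDemazureRoot (polycone gens) (e1 r)) ->
  (forall r, isDemazureRoot (polycone gens) (e2 r)) ->
  compatible p e1 e2 ->
  isFace (polycone gens) gamma ->
  (forall r, ~ gamma (p r) -> perp gamma (e1 r) \/ perp gamma (e2 r)) ->
  isFace (polycone gens)
    (conic_hull (fun x => gamma x \/ exists r, ~ gamma (p r) /\ x = p r)).
Proof.
move=> Hsc [Htau [Hinj [Hray [Hq Hbasis]]]] He1 He2 Hcomp [u [Hu Hgam]] Hperp.
set sigma := polycone gens.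
set A := fun x => gamma x \/ exists r, ~ gamma (p r) /\ x = p r.
have [Q [HQ HsQ]] := rays_gen Hsc.
have [f Hf] : exists f : 'I_k -> vecQ n, forall r,
    (f r = e1 r \/ f r = e2 r) /\ (~ gamma (p r) -> perp gamma (f r)).
  apply: (@fin_all_exists _ (fun _ => vecQ n) (fun r g => (g = e1 r \/ g = e2 r) /\ (~ gamma (p r) -> perp gamma g))) => r.
  case: (classic (gamma (p r))) => hg.
    by exists (e1 r); split; [left | move=> /(_ hg)].
  case: (Hperp r hg) => hp; [exists (e1 r) | exists (e2 r)]; split => //; by [left | right].
have Hfp : forall r s, pairing (p s) (f r) = - (r == s)%:R.
  by move=> r s; case: (Hf r) => [[->|->] _]; have [h1 h2] := Hcomp r s.
have Hfroot : forall r q, isRayGen sigma q -> q <> p r -> 0 <= pairing q (f r).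
  move=> r q Hqr qr.
  have [p' [Hp' [_ [Hm1 Hoth]]]] : isDemazureRoot sigma (f r).
    by case: (Hf r) => [[->|->] _]; [exact: He1 | exact: He2].
  case: (classic (q = p')) => [qp|qp]; last exact: Hoth.
  case: (classic (p' = p r)) => [pr|pr]; first by exfalso; apply: qr; rewrite qp pr.
  have := Hoth (p r) (Hray r) (fun h => pr (esym h)).
  by rewrite Hfp eqxx /= => h; exfalso; move: h; rewrite oppr_ge0 ler10.
have Hsig : forall x, gamma x -> sigma x /\ pairing x u = 0 by move=> x /Hgam.
have Ha : forall r, 0 <= pairing (p r) u by move=> r; apply: Hu; exact: raygen_in (Hray r).
have Hfg : forall r x, gamma x -> pairing (p r) u * pairing x (f r) = 0.
  move=> r x gx; case: (classic (gamma (p r))) => hg.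
    by rewrite (proj2 (Hsig _ hg)) mul0r.
  by rewrite ((proj2 (Hf r)) hg x gx) mulr0.
pose u' := u + \sum_(r < k) pairing (p r) u *: f r.
have Hu' : forall x, pairing x u' = pairing x u + \sum_(r < k) pairing (p r) u * pairing x (f r).
  by move=> x; rewrite /u' pairingDr pairing_sumr; congr (_ + _); apply: eq_bigr => r _; rewrite pairingZr.
have Hps : forall s, pairing (p s) u' = 0.
  move=> s; rewrite Hu' (bigD1 s) //= big1 => [|r rs]; last by rewrite Hfp (negbTE rs) mulr0.
  by rewrite Hfp eqxx addr0 mulrN1 subrr.
have HA0 : forall v, A v -> pairing v u' = 0.
  move=> v [gv|[r [_ ->]]]; last exact: Hps.
  by rewrite Hu' (proj2 (Hsig _ gv)) add0r big1 // => r _; apply: Hfg.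
have Hrays : forall q, isRayGen sigma q -> 0 <= pairing q u' /\ (pairing q u' = 0 -> A q).
  move=> q Hqr.
  case: (classic (exists s, q = p s)) => [[s ->]|hq].
    rewrite Hps; split => // _.
    by case: (classic (gamma (p s))) => hg; [left | right; exists s].
  have Hs : 0 <= \sum_(r < k) pairing (p r) u * pairing q (f r).
    apply: sumr_ge0 => r _; apply: mulr_ge0 => //; apply: Hfroot => // qr; apply: hq; by exists r.
  have hqu : 0 <= pairing q u by apply: Hu; exact: raygen_in Hqr.
  rewrite Hu'; split; first exact: addr_ge0.
  move=> h0; left; apply/Hgam; split; first exact: raygen_in Hqr.
  lra.
exists u'; split.
  move=> x /HsQ Hx; apply: incone_pair Hx => q qQ; exact: (proj1 (Hrays q (HQ q qQ))).
move=> x; split.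
  move=> Hx; split.
    apply/polyconeP; apply: conic_incone Hx => v [gv|[r [_ ->]]].
      by apply/polyconeP; exact: (proj1 (Hsig _ gv)).
    by apply/polyconeP; exact: raygen_in (Hray r).
  move: Hx => [m [g [c [Hg [Hc ->]]]]].
  by rewrite pairing_suml big1 // => i _; rewrite pairingZl HA0 ?mulr0.
move=> [/HsQ Hx Hx0].
have HQ' : forall v, v \in Q -> 0 <= pairing v u' by move=> v vQ; exact: (proj1 (Hrays v (HQ v vQ))).
apply: incone_conic (incone_filter0 HQ' Hx Hx0) => v.
rewrite mem_filter => /andP [/eqP hv vQ]; exact: (proj2 (Hrays v (HQ v vQ))).
Qed.
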